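(* For a monoid $S$ the following are equivalent: (1) $S$ has the fem-property; (2) every $2$-generated $S$-act embeds into a monogenic $S$-act; (3) the free $S$-act $F_S(X)$ with $|X|=2$ embeds into a monogenic $S$-act; (4) $F_S(X)$ with $|X|=2$ embeds into $S$ (regarded as a right $S$-act); (5) there exist left cancellable elements $s,t\in S$ with $sS\cap tS=\emptyset$.
   Context: Let $S$ be a monoid. A (right) $S$-act is a set $A$ with a map $A\times S\to A$, $(a,s)\mapsto as$, such that $a1=a$ and $a(st)=(as)t$; $S$ is a right $S$-act under right multiplication. An $S$-act is monogenic if it equals $cS$ for some element $c$, $2$-generated if it equals $aS\cup bS$ for some $a,b$, and finitely generated if it is a union of finitely many monogenic subacts. An embedding is an injective $S$-morphism. For a set $X$, $F_S(X)$ is the free $S$-act on $X$: elements $xs$ ($x\in X$, $s\in S$) with $xs=yt$ iff $x=y$ and $s=t$, and action $(xs)t=x(st)$. $S$ has the fem-property if every finitely generated $S$-act embeds into a monogenic $S$-act. An element $s$ is left cancellable if $su=sv$ implies $u=v$. *)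

(* Defs.v *)
From Stdlib Require Import List.
Import ListNotations.

Definition is_monoid {S : Type} (mul : S -> S -> S) (e : S) : Prop :=
  (forall s t u, mul s (mul t u) = mul (mul s t) u) /\
  (forall s, mul e s = s) /\ (forall s, mul s e = s).

Definition is_act {S : Type} (mul : S -> S -> S) (e : S)
  {A : Type} (act : A -> S -> A) : Prop :=
  (forall a, act a e = a) /\
  (forall a s t, act a (mul s t) = act (act a s) t).

Definition is_morphism {S A B : Type} (actA : A -> S -> A) (actB : B -> S -> B)
  (f : A -> B) : Prop :=
  forall a s, f (actA a s) = actB (f a) s.

Definition is_embedding {S A B : Type} (actA : A -> S -> A) (actB : B -> S -> B)
  (f : A -> B) : Prop :=
  is_morphism actA actB f /\ (forall a a', f a = f a' -> a = a').

Definition monogenic {S A : Type} (act : A -> S -> A) : Prop :=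
  exists c : A, forall a : A, exists s : S, a = act c s.

Definition two_generated {S A : Type} (act : A -> S -> A) : Prop :=
  exists a b : A, forall x : A, exists s : S, x = act a s \/ x = act b s.

Definition finitely_generated {S A : Type} (act : A -> S -> A) : Prop :=
  exists l : list A, forall x : A, exists c, In c l /\ exists s : S, x = act c s.

Definition embeds_into_monogenic {S : Type} (mul : S -> S -> S) (e : S)
  {A : Type} (actA : A -> S -> A) : Prop :=
  exists (B : Type) (actB : B -> S -> B),
    is_act mul e actB /\ monogenic actB /\
    exists f : A -> B, is_embedding actA actB f.

Definition fem_property {S : Type} (mul : S -> S -> S) (e : S) : Prop :=
  forall (A : Type) (act : A -> S -> A),
    is_act mul e act -> finitely_generated act -> embeds_into_monogenic mul e act.

Definition free_act {S : Type} (mul : S -> S -> S) (X : Type)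
  (p : X * S) (t : S) : X * S := (fst p, mul (snd p) t).

Definition regular_act {S : Type} (mul : S -> S -> S) : S -> S -> S := mul.

Definition left_cancellable {S : Type} (mul : S -> S -> S) (s : S) : Prop :=
  forall u v, mul s u = mul s v -> u = v.

(* Main.v *)
Require Import Defs.
From Stdlib Require Import List Classical ClassicalEpsilon ProofIrrelevance.
Import ListNotations.

Section Cons.
Variables (M : Type) (mul : M -> M -> M) (e : M).
Hypothesis assoc : forall s t u, mul s (mul t u) = mul (mul s t) u.
Hypothesis idl : forall s, mul e s = s.
Hypothesis idr : forall s, mul s e = s.
Variables (s t : M).
Hypothesis Hs : left_cancellable mul s.
Hypothesis Ht : left_cancellable mul t.
Hypothesis Hd : forall u v : M, mul s u <> mul t v.

Fixpoint pw (i : nat) : M := match i with 0 => e | S i => mul t (pw i) end.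
Definition U i x := mul (pw i) (mul s x).

Lemma U_S i x : U (S i) x = mul t (U i x).
Proof. unfold U; simpl. symmetry; apply assoc. Qed.

Lemma U_assoc i y z : mul (U i y) z = U i (mul y z).
Proof. unfold U. rewrite <- assoc. rewrite <- assoc. reflexivity. Qed.

Lemma U_inj i : forall j x y, U i x = U j y -> i = j /\ x = y.
Proof.
  induction i as [|i IH]; intros [|j] x y H.
  - unfold U in H; simpl in H; rewrite !idl in H. split; auto.
  - rewrite U_S in H; unfold U at 1 in H; simpl in H; rewrite idl in H.
    exfalso; exact (Hd _ _ H).
  - rewrite U_S in H; unfold U at 2 in H; simpl in H; rewrite idl in H.
    exfalso; exact (Hd _ _ (eq_sym H)).
  - rewrite !U_S in H. apply Ht in H. destruct (IH _ _ _ H). subst. auto.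
Qed.

Lemma e_notin i y : e <> U i y.
Proof.
  intro H. destruct i as [|i].
  - unfold U in H; simpl in H; rewrite idl in H.
    apply (Hd (mul y t) e). rewrite assoc, <- H, idl, idr. reflexivity.
  - rewrite U_S in H. apply (Hd e (mul (U i y) s)).
    rewrite idr, assoc, <- H, idl. reflexivity.
Qed.

Variables (A : Type) (act : A -> M -> A).
Hypothesis Hact : is_act mul e act.
Variable c : nat -> A.
Hypothesis Hc : forall a, exists i x, a = act (c i) x.

Definition outP (w : M) : Prop := ~ exists p : nat * M, w = U (fst p) (snd p).
Definition B : Type := (A + {w : M | outP w})%type.

Definition phi (v : M) : B :=
  match excluded_middle_informative (exists p : nat * M, v = U (fst p) (snd p)) with
  | left H => let p := proj1_sig (constructive_indefinite_description _ H) in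
              inl (act (c (fst p)) (snd p))
  | right H => inr (exist _ v H)
  end.

Lemma phi_in i y : phi (U i y) = inl (act (c i) y).
Proof.
  unfold phi. destruct excluded_middle_informative as [H|H].
  - destruct constructive_indefinite_description as [[i' y'] E]; simpl in *.
    destruct (U_inj _ _ _ _ E). subst. reflexivity.
  - exfalso. apply H. exists (i, y). reflexivity.
Qed.

Lemma phi_out w (H : outP w) : phi w = inr (exist _ w H).
Proof.
  unfold phi. destruct excluded_middle_informative as [H'|H'].
  - exfalso; exact (H H').
  - f_equal. f_equal. apply proof_irrelevance.
Qed.

Definition actB (b : B) (x : M) : B :=
  match b with
  | inl a => inl (act a x)
  | inr w => phi (mul (proj1_sig w) x)
  end.

Lemma phi_act v z : actB (phi v) z = phi (mul v z).
Proof.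
  destruct (classic (exists p : nat * M, v = U (fst p) (snd p))) as [[[i y] E]|H].
  - simpl in E; subst. rewrite phi_in, U_assoc, phi_in. simpl.
    destruct Hact as [_ H2]. rewrite H2. reflexivity.
  - rewrite (phi_out v H). reflexivity.
Qed.

Lemma B_act : is_act mul e actB.
Proof.
  destruct Hact as [H1 H2]. split.
  - intros [a|[w Hw]]; simpl.
    + rewrite H1; reflexivity.
    + rewrite idr. apply phi_out.
  - intros [a|[w Hw]] x y; simpl.
    + rewrite H2; reflexivity.
    + rewrite phi_act, assoc. reflexivity.
Qed.

Lemma e_out : outP e.
Proof. intros [[i y] E]. exact (e_notin _ _ E). Qed.

Lemma B_mono : monogenic actB.
Proof.
  exists (inr (exist _ e e_out)). intros [a|[w Hw]]; simpl.
  - destruct (Hc a) as [i [x E]]. exists (U i x). rewrite idl, phi_in, E. reflexivity.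
  - exists w. rewrite idl, (phi_out w Hw). reflexivity.
Qed.

Lemma A_embeds : embeds_into_monogenic mul e act.
Proof.
  exists B, actB. split; [apply B_act|]. split; [apply B_mono|].
  exists inl. split.
  - intros a x. reflexivity.
  - intros a a' H. injection H. auto.
Qed.
End Cons.

Lemma regular_is_act (S : Type) (mul : S -> S -> S) (e : S) (HS : is_monoid mul e) :
  is_act mul e (regular_act mul).
Proof.
  destruct HS as [a [l r]]. split; intros; unfold regular_act; auto.
Qed.

Lemma free_is_act (S : Type) (mul : S -> S -> S) (e : S) (HS : is_monoid mul e) :
  is_act mul e (free_act mul bool).
Proof.
  destruct HS as [a [l r]]. split.
  - intros [b x]; unfold free_act; simpl; rewrite r; reflexivity.
  - intros [b x] y z; unfold free_act; simpl; rewrite a; reflexivity.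
Qed.

Theorem mainTheorem4 (S : Type) (mul : S -> S -> S) (e : S)
  (HS : is_monoid mul e) :
  (fem_property mul e <->
   (forall (A : Type) (act : A -> S -> A),
      is_act mul e act -> two_generated act -> embeds_into_monogenic mul e act)) /\
  (fem_property mul e <-> embeds_into_monogenic mul e (free_act mul bool)) /\
  (fem_property mul e <->
   exists f : bool * S -> S, is_embedding (free_act mul bool) (regular_act mul) f) /\
  (fem_property mul e <->
   exists s t : S, left_cancellable mul s /\ left_cancellable mul t /\
     (forall u v : S, mul s u <> mul t v)).
Proof.
  pose proof HS as HS'. destruct HS' as [assoc [idl idr]].
  assert (F12 : fem_property mul e ->
   (forall (A : Type) (act : A -> S -> A),
      is_act mul e act -> two_generated act -> embeds_into_monogenic mul e act)).
  { intros Hf A act Ha [a [b Hab]]. apply Hf; auto.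
    exists [a; b]. intros x. destruct (Hab x) as [y [E|E]].
    - exists a. split; [simpl; auto|]. eauto.
    - exists b. split; [simpl; auto|]. eauto. }
  assert (F23 : (forall (A : Type) (act : A -> S -> A),
      is_act mul e act -> two_generated act -> embeds_into_monogenic mul e act) ->
      embeds_into_monogenic mul e (free_act mul bool)).
  { intros H. apply H. apply free_is_act; auto.
    exists (true, e), (false, e). intros [b x]. exists x. unfold free_act; simpl.
    rewrite idl. destruct b; auto. }
  assert (F35 : embeds_into_monogenic mul e (free_act mul bool) ->
     exists s t : S, left_cancellable mul s /\ left_cancellable mul t /\
     (forall u v : S, mul s u <> mul t v)).
  { intros [B [actB [[Ha1 Ha2] [[c Hc] [f [Hm Hi]]]]]].
    destruct (Hc (f (true, e))) as [s Es].
    destruct (Hc (f (false, e))) as [t Et].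
    assert (Kb : forall b x, f (b, x) = actB c (mul (if b then s else t) x)).
    { intros b x. rewrite Ha2. destruct b.
      - rewrite <- Es, <- Hm. unfold free_act; simpl. rewrite idl; reflexivity.
      - rewrite <- Et, <- Hm. unfold free_act; simpl. rewrite idl; reflexivity. }
    exists s, t. split; [|split].
    - intros u v E. assert (f (true, u) = f (true, v)) as E'.
      { rewrite !Kb. rewrite E. reflexivity. }
      apply Hi in E'. injection E'; auto.
    - intros u v E. assert (f (false, u) = f (false, v)) as E'.
      { rewrite !Kb. rewrite E. reflexivity. }
      apply Hi in E'. injection E'; auto.
    - intros u v E. assert (f (true, u) = f (false, v)) as E'.
      { rewrite !Kb. rewrite E. reflexivity. }
      apply Hi in E'. discriminate. }
  assert (F5f : (exists s t : S, left_cancellable mul s /\ left_cancellable mul t /\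
     (forall u v : S, mul s u <> mul t v)) -> fem_property mul e).
  { intros [s [t [Hs [Ht Hd]]]] A act Ha [l Hl].
    destruct l as [|d l'].
    - exists S, (regular_act mul). split; [apply regular_is_act; auto|]. split.
      + exists e. intros a. exists a. unfold regular_act. rewrite idl; reflexivity.
      + assert (HA : A -> False) by (intros a; destruct (Hl a) as [c [[] _]]).
        exists (fun a => False_rect S (HA a)).
        split; intros a; destruct (HA a).
    - apply (A_embeds S mul e assoc idl idr s t Hs Ht Hd A act Ha
               (fun i => nth i (d :: l') d)).
      intros a. destruct (Hl a) as [c [Hin [x E]]].
      destruct (In_nth _ _ d Hin) as [i [_ Ei]]. exists i, x. rewrite Ei. exact E. }
  assert (F54 : (exists s t : S, left_cancellable mul s /\ left_cancellable mul t /\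
     (forall u v : S, mul s u <> mul t v)) ->
     exists f : bool * S -> S, is_embedding (free_act mul bool) (regular_act mul) f).
  { intros [s [t [Hs [Ht Hd]]]].
    exists (fun p : bool * S => mul (if fst p then s else t) (snd p)). split.
    - intros [b x] y. unfold free_act, regular_act; simpl. rewrite assoc. reflexivity.
    - intros [[|] x] [[|] y]; simpl; intros E.
      + apply Hs in E; subst; reflexivity.
      + exfalso; exact (Hd _ _ E).
      + exfalso; exact (Hd _ _ (eq_sym E)).
      + apply Ht in E; subst; reflexivity. }
  assert (F43 : (exists f : bool * S -> S, is_embedding (free_act mul bool) (regular_act mul) f) ->
     embeds_into_monogenic mul e (free_act mul bool)).
  { intros [f Hf]. exists S, (regular_act mul). split; [apply regular_is_act; auto|].
    split; [|eauto]. exists e. intros a. exists a. unfold regular_act. rewrite idl; reflexivity. }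
  repeat split; intros H; eauto.
Qed.
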